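(* As formal power series in $w,x,y,z$, $$Q(w,x,y,z):=\sum_{k\ge1}\sum_{j=0}^k\sum_{a=0}^jq_{k,j,a}(w)\,x^ky^jz^a=\frac{xy\,(-w^2x^2+wx^2z+wx^2+2wx+z)}{(wx^2y+wx^2+xyz+wx-x-1)(wx-1)(x+1)}.$$
   Context: For $k\ge1$ and a nonempty $S=\{s_1<\dots<s_j\}\subseteq[k]$, define $p_1(S)=s_2-s_1,\dots,p_{j-1}(S)=s_j-s_{j-1}$, $p_j(S)=k+s_1-s_j$. For $1\le j\le k$ and $0\le a\le j$ define $$q_{k,j,a}(x)=\sum_{S\subseteq[k],\,|S|=j}\ \sum_{A\subseteq[j],\,|A|=a}\ \prod_{i=1}^j\Big(\sum_{b=0}^{p_i(S)-1}(-1)^{p_i(S)-1-b}x^b+(-1)^{p_i(S)}\mathbf 1\{i\notin A\}\Big),$$ and set $q_{k,0,0}=0$ and $q_{k,j,a}=0$ when $a>j$. *)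

(* Defs.v *)
From mathcomp Require Import all_boot all_order all_algebra.
Set Implicit Arguments. Unset Strict Implicit. Unset Printing Implicit Defensive.
Import GRing.Theory.
Local Open Scope ring_scope.

(* Formal power series in x,y,z with coefficients in Z[w] (= {poly int},
   'X playing the role of w).  f k j a = coefficient of x^k y^j z^a. *)
Definition fps := nat -> nat -> nat -> {poly int}.

Definition fps_add (f g : fps) : fps := fun k j a => f k j a + g k j a.
Definition fps_opp (f : fps) : fps := fun k j a => - f k j a.
Definition fps_mul (f g : fps) : fps := fun k j a =>
  \sum_(i < k.+1) \sum_(l < j.+1) \sum_(m < a.+1)
     f i l m * g (k - i)%N (j - l)%N (a - m)%N.
Definition fps_mon (c : {poly int}) (k0 j0 a0 : nat) : fps := fun k j a =>
  if [&& k == k0, j == j0 & a == a0] then c else 0.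

Definition fps1 : fps := fps_mon 1 0 0 0.
Definition fpsW : fps := fps_mon 'X 0 0 0.
Definition fpsX : fps := fps_mon 1 1 0 0.
Definition fpsY : fps := fps_mon 1 0 1 0.
Definition fpsZ : fps := fps_mon 1 0 0 1.

Declare Scope fps_scope.
Delimit Scope fps_scope with F.
Notation "f + g" := (fps_add f g) : fps_scope.
Notation "f - g" := (fps_add f (fps_opp g)) : fps_scope.
Notation "- f" := (fps_opp f) : fps_scope.
Notation "f * g" := (fps_mul f g) : fps_scope.

(* S = {s_1 < ... < s_j} \subseteq [k], encoded 0-based as a subset of 'I_k
   (shifting all elements by -1 does not change the gaps p_i(S)). *)
Definition sorted_elems (k : nat) (S : {set 'I_k}) : seq nat :=
  sort leq [seq val x | x <- enum S].

(* p_{i+1}(S) for i : 0-based index, j = |S| *)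
Definition gap (k : nat) (S : {set 'I_k}) (i : nat) : nat :=
  let s := sorted_elems S in
  let j := size s in
  if (i.+1 < j)%N then (nth 0 s i.+1 - nth 0 s i)%N
  else (k + nth 0 s 0 - nth 0 s j.-1)%N.

Definition factor (p : nat) (inA : bool) : {poly int} :=
  \sum_(b < p) (-1) ^+ (p - 1 - b)%N * 'X^b + (-1) ^+ p * (~~ inA)%:R.

Definition q (k j a : nat) : {poly int} :=
  if j == 0%N then 0 else
  \sum_(S : {set 'I_k} | #|S| == j)
    \sum_(A : {set 'I_j} | #|A| == a)
      \prod_(i < j) factor (gap S i) (i \in A).

Definition Qser : fps := fun k j a =>
  if [&& (1 <= k)%N, (j <= k)%N & (a <= j)%N] then q k j a else 0.

Definition Numer : fps :=
  (fpsX * fpsY *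
   (- (fpsW * fpsW * fpsX * fpsX) + fpsW * fpsX * fpsX * fpsZ
    + fpsW * fpsX * fpsX + (fpsW + fpsW) * fpsX + fpsZ))%F.

Definition Denom : fps :=
  ((fpsW * fpsX * fpsX * fpsY + fpsW * fpsX * fpsX + fpsX * fpsY * fpsZ
    + fpsW * fpsX - fpsX - fps1) * (fpsW * fpsX - fps1) * (fpsX + fps1))%F.

(* Main.v *)
Require Import Defs.
From mathcomp Require Import all_boot all_order all_algebra.
From mathcomp Require Import ring zify.
Set Implicit Arguments. Unset Strict Implicit. Unset Printing Implicit Defensive.
Import GRing.Theory.

Fixpoint subs (l : seq nat) : seq (seq nat) :=
  if l is x :: t then [seq x :: u | u <- subs t] ++ subs t else [:: [::]].

Lemma subs_map f l : subs (map f l) = map (map f) (subs l).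
Proof.
elim: l => [//|x t IH] /=; rewrite IH map_cat -!map_comp; congr (_ ++ _).
Qed.

Lemma mem_subs_fwd m n s : s \in subs (iota m n) ->
  sorted ltn s && all (fun x => m <= x < m + n) s.
Proof.
elim: n m s => [|n IH] m s /=.
  by rewrite inE => /eqP ->.
rewrite mem_cat => /orP[/mapP[t tin ->]|sin].
  have /andP[st at'] := IH _ _ tin.
  rewrite /= leqnn addnS ltnS leq_addr /= path_sortedE; last exact: ltn_trans.
  rewrite st andbT -all_predI; apply: sub_all at' => y /andP[h1 h2] /=.
  by rewrite h1 (ltnW h1) /=; lia.
have /andP[-> at'] := IH _ _ sin.
apply: sub_all at' => y /andP[h1 h2] /=.
apply/andP; split; lia.
Qed.

Lemma mem_subs_bwd m n s : sorted ltn s -> all (fun x => m <= x < m + n) s ->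
  s \in subs (iota m n).
Proof.
elim: n m s => [|n IH] m s /=.
  case: s => [|x s] _; first by rewrite inE.
  by rewrite /= addn0; case: leqP.
move=> ss as'; rewrite mem_cat; case: s ss as' => [|x t] ss as'.
  by rewrite orbC IH.
move: as' => /= /andP[/andP[mx xn] at'].
have at2 : all (ltn x) t.
  by apply: order_path_min ss; exact: ltn_trans.
have st : sorted ltn t by apply: path_sorted ss.
case: (eqVneq x m) => [exm|nxm].
  subst x; apply/orP; left; apply/mapP; exists t => //; apply: IH => //.
  apply/allP => y yt.
  move: (allP at2 y yt) (allP at' y yt) => /= h1 /andP[_ h2].
  rewrite h1 /=; lia.
apply/orP; right; apply: IH => //=.
have mx' : m < x by rewrite ltn_neqAle eq_sym nxm.
rewrite mx' /=; apply/andP; split; first lia.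
apply/allP => y yt.
move: (allP at2 y yt) (allP at' y yt) => /= h1 /andP[_ h2].
apply/andP; split; lia.
Qed.

Lemma subs_uniq m n : uniq (subs (iota m n)).
Proof.
elim: n m => [//|n IH] m /=; rewrite cat_uniq IH andbT.
rewrite map_inj_uniq ?IH //; last by move=> ? ? [].
apply/hasPn => s sin; apply/mapP => -[t _ e]; subst s.
move: (mem_subs_fwd sin) => /andP[_ /= /andP[/andP[h _] _]].
by rewrite ltnn in h.
Qed.

Lemma big_subs_head {R : nmodType} (F : seq nat -> R) m n :
  (\sum_(s <- subs (iota m n)) F s =
  F [::] + \sum_(h <- iota m n) \sum_(t <- subs (iota h.+1 (m + n - h.+1))) F (h :: t))%R.
Proof.
elim: n m => [|n IH] m /=; first by rewrite big_seq1 big_nil addr0.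
rewrite big_cat big_map IH big_cons addrCA; congr (_ + _)%R.
  by rewrite addnS subSS addKn.
by rewrite addSnnS.
Qed.

Lemma se_mem k (S : {set 'I_k}) (i : 'I_k) : (val i \in sorted_elems S) = (i \in S).
Proof. by rewrite /sorted_elems mem_sort mem_map ?mem_enum //; exact: val_inj. Qed.

Lemma se_sorted k (S : {set 'I_k}) : sorted ltn (sorted_elems S).
Proof.
rewrite ltn_sorted_uniq_leq sort_uniq map_inj_uniq ?enum_uniq //=; last exact: val_inj.
by apply: sort_sorted; exact: leq_total.
Qed.

Lemma se_all k (S : {set 'I_k}) : all (fun x => 0 <= x < 0 + k) (sorted_elems S).
Proof.
apply/allP => x; rewrite /sorted_elems mem_sort => /mapP[i _ ->]; by rewrite /= ltn_ord.
Qed.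

Lemma se_size k (S : {set 'I_k}) : size (sorted_elems S) = #|S|.
Proof. by rewrite /sorted_elems size_sort size_map cardE. Qed.

Lemma se_inj k : injective (@sorted_elems k).
Proof. by move=> S1 S2 e; apply/setP => i; rewrite -!se_mem e. Qed.

Lemma se_surj k s : sorted ltn s -> all (fun x => x < k) s ->
  sorted_elems [set i : 'I_k | val i \in s] = s.
Proof.
move=> ss ak; rewrite /sorted_elems.
have pe : perm_eq [seq val x | x <- enum [set i : 'I_k | val i \in s]] s.
  apply: uniq_perm.
  - by rewrite map_inj_uniq ?enum_uniq //; exact: val_inj.
  - by move: ss; rewrite ltn_sorted_uniq_leq => /andP[].
  move=> x; apply/mapP/idP => [[i]|xs]; first by rewrite mem_enum inE => ? ->.
  by exists (Ordinal (allP ak x xs)); rewrite // mem_enum inE.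
rewrite (perm_sortP leq_total leq_trans anti_leq _ _ pe).
by apply: sorted_sort; [exact: leq_trans | apply: sub_sorted ss; exact: ltnW].
Qed.

Lemma big_sets_subs {R : nmodType} k (F : seq nat -> R) :
  (\sum_(S : {set 'I_k}) F (sorted_elems S) = \sum_(s <- subs (iota 0 k)) F s)%R.
Proof.
rewrite -(big_map (@sorted_elems k) xpredT); apply: perm_big.
apply: uniq_perm.
- by rewrite map_inj_uniq ?index_enum_uniq //; exact: se_inj.
- exact: subs_uniq.
move=> s; apply/mapP/idP => [[S _ ->]|sin].
  by apply: mem_subs_bwd; [exact: se_sorted | exact: se_all].
move: (mem_subs_fwd sin) => /andP[ss as'].
exists [set i : 'I_k | val i \in s]; first by rewrite mem_index_enum.
rewrite se_surj //; apply: sub_all as' => x /andP[].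
Qed.

Local Open Scope ring_scope.
Local Notation B := {poly {poly {poly int}}}.

Definition Fs (p : nat) : {poly int} := \sum_(b < p) (-1) ^+ (p - 1 - b)%N * 'X^b.
Definition gz (p : nat) : {poly {poly int}} := (factor p false)%:P + 'X * (factor p true)%:P.
Definition gB (p : nat) : B := (gz p)%:P.

Fixpoint linw (h : nat) (t : seq nat) : B :=
  if t is x :: t' then gB (x - h)%N * linw x t' else 1.
Definition cycw k h t : B := linw h t * gB (k + h - last h t)%N.
Definition gapL k (s : seq nat) (i : nat) : nat :=
  let j := size s in
  if (i.+1 < j)%N then (nth 0 s i.+1 - nth 0 s i)%N
  else (k + nth 0 s 0 - nth 0 s j.-1)%N.

Lemma gapE k (S : {set 'I_k}) i : gap S i = gapL k (sorted_elems S) i.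
Proof. by []. Qed.

Lemma linw_prod h t :
  \prod_(i < size t) gB (nth 0 t i - nth 0 (h :: t) i)%N = linw h t.
Proof.
elim: t h => [|x t IH] h /=; first by rewrite big_ord0.
by rewrite big_ord_recl /= IH.
Qed.

Lemma prod_gapL k h t :
  \prod_(i < size (h :: t)) gB (gapL k (h :: t) i) = cycw k h t.
Proof.
rewrite big_ord_recr /= /cycw -(linw_prod h t); congr (_ * _).
  by apply: eq_bigr => i _; rewrite /gapL /= ltnS ltn_ord.
rewrite /gapL /= ltnn; congr (gB (_ - _)).
by rewrite (nth_last 0 (h :: t)).
Qed.

Lemma linw_shift c h t : linw (c + h) (map (addn c) t) = linw h t.
Proof. by elim: t h => [//|x t IH] h /=; rewrite subnDl IH. Qed.

Lemma linw_shift0 h t : linw h (map (addn h) t) = linw 0 t.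
Proof. by rewrite -{1}(addn0 h) linw_shift. Qed.

Lemma last_shift0 h t : last h (map (addn h) t) = (h + last 0 t)%N.
Proof. by rewrite -{1}(addn0 h) last_map. Qed.

Lemma last_shift c h t : last (c + h) (map (addn c) t) = (c + last h t)%N.
Proof. by rewrite last_map. Qed.

Lemma cycw_shift k c h t : cycw k (c + h) (map (addn c) t) = cycw k h t.
Proof. by rewrite /cycw linw_shift last_shift addnCA subnDl. Qed.

Definition Tset k : B :=
  \sum_(S : {set 'I_k} | S != set0) 'X^#|S| * \prod_(i < #|S|) gB (gap S i).
Definition Fk k (s : seq nat) : B :=
  if s is h :: t then 'X^((size t).+1) * cycw k h t else 0.
Definition Psi K c : B := \sum_(t <- subs (iota 1 c)) 'X^((size t).+1) * cycw K 0 t.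
Definition Tp k : B := \sum_(c < k) Psi k c.

Lemma Tset_Fk k : Tset k = \sum_(S : {set 'I_k}) Fk k (sorted_elems S).
Proof.
rewrite /Tset big_mkcond; apply: eq_bigr => S _.
case E: (sorted_elems S) => [|h t] /=.
  have -> : S = set0 by apply/eqP; rewrite -cards_eq0 -se_size E.
  by rewrite eqxx.
have ne : S != set0 by rewrite -cards_eq0 -se_size E.
rewrite ne -se_size E -(prod_gapL k h t); congr (_ * _).
by apply: eq_bigr => i _; rewrite gapE E.
Qed.

Lemma Tset_Tp k : Tset k = Tp k.
Proof.
rewrite Tset_Fk (big_sets_subs k (Fk k)) big_subs_head /= add0r.
rewrite /Tp -(big_mkord xpredT) big_nat_rev /= /index_iota subn0.
apply: eq_bigr => h _; rewrite add0n -addn1 iotaDl subs_map big_map /Psi.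
apply: eq_bigr => t _ /=; rewrite size_map; congr (_ * _).
by rewrite -{1}(addn0 h) cycw_shift.
Qed.

Lemma Psi_rec K c :
  Psi K c = 'X * gB K + \sum_(1 <= h < c.+1) 'X * gB h * Psi (K - h) (c - h).
Proof.
rewrite {1}/Psi big_subs_head /= /cycw /= addn0 subn0 expr1 mul1r; congr (_ + _).
rewrite /index_iota subn1 /=.
apply: eq_bigr => h _; rewrite add1n subSS -addn1 iotaDl subs_map big_map /Psi mulr_sumr.
apply: eq_bigr => t _ /=. rewrite size_map linw_shift0 last_shift0 /cycw addn0 !subn0 subnDA.
by rewrite exprS; ring.
Qed.

Lemma exch_sum (A : nat -> nat -> B) k :
  \sum_(c < k) \sum_(1 <= h < c.+1) A h (c - h)%N =
  \sum_(1 <= h < k.+1) \sum_(c < k - h) A h c.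
Proof.
elim: k => [|k IH]; first by rewrite big_ord0 big_geq.
rewrite big_ord_recr /= IH (big_nat_recr k.+1) //= subnn big_ord0 addr0.
rewrite -big_split /=; apply: eq_big_nat => h /andP[h1 h2].
by rewrite subSn // big_ord_recr.
Qed.

Definition gg h : B := if h == 0%N then 0 else gB h.

Lemma Tp_rec k :
  Tp k = 'X * (gg k *+ k) + 'X * \sum_(h < k.+1) gg h * Tp (k - h).
Proof.
rewrite {1}/Tp; under eq_bigr do rewrite Psi_rec.
rewrite big_split /= sumr_const card_ord; congr (_ + _).
  by rewrite /gg; case: k => [|k] /=; [rewrite !mulr0n mulr0 | rewrite mulrnAr].
rewrite (exch_sum (fun h c => 'X * gB h * Psi (k - h) c)) -(big_mkord xpredT (fun h => gg h * Tp (k - h))) big_ltn // /gg eqxx mul0r add0r mulr_sumr.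
apply: eq_big_nat => h /andP[h1 h2]; rewrite -[h == 0%N]negbK -lt0n h1 /= /Tp.
by rewrite !mulr_sumr; apply: eq_bigr => c _; rewrite mulrA.
Qed.

Lemma coefT k j : (Tset k)`_j =
  if j == 0%N then 0 else \sum_(S : {set 'I_k} | #|S| == j) \prod_(i < j) gz (gap S i).
Proof.
rewrite /Tset coef_sum.
transitivity (\sum_(S : {set 'I_k} | S != set0) if #|S| == j then \prod_(i < j) gz (gap S i) else 0).
  apply: eq_bigr => S _; rewrite /gB -rmorph_prod coefXnM coefC.
  case: (ltnP j #|S|) => h.
    by rewrite gtn_eqF.
  case: (eqVneq #|S| j) => [e|ne]; first by rewrite e subnn eqxx.
  have -> : (j - #|S| == 0)%N = false.
    by apply/negbTE; rewrite subn_eq0 -ltnNge ltn_neqAle ne h.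
  done.
rewrite -big_mkcondr; case: eqP => [->|j0].
  by rewrite big_pred0 // => S; rewrite cards_eq0 andNb.
apply: eq_bigl => S; case: (eqVneq #|S| j) => [e|ne]; last by rewrite andbF.
by rewrite andbT -cards_eq0 e; apply/eqP.
Qed.

Lemma coef_prod_gz j (p : 'I_j -> nat) a :
  (\prod_(i < j) gz (p i))`_a =
  \sum_(A : {set 'I_j} | #|A| == a) \prod_(i < j) factor (p i) (i \in A).
Proof.
under eq_bigr do rewrite /gz addrC.
rewrite bigA_distr coef_sum.
transitivity (\sum_(A : {set 'I_j}) if #|A| == a then \prod_(i < j) factor (p i) (i \in A) else 0); last first.
  by rewrite [RHS]big_mkcond.
apply: eq_big => // A _.
have -> : \prod_(i < j) (if i \in A then 'X * (factor (p i) true)%:P else (factor (p i) false)%:P)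
   = 'X^#|A| * (\prod_(i < j) factor (p i) (i \in A))%:P.
  rewrite rmorph_prod (bigID (mem A)) [in RHS](bigID (mem A)) /= mulrA.
  congr (_ * _).
    transitivity (\prod_(i in A) ('X * (factor (p i) true)%:P)).
      by apply: eq_bigr => i ->.
    rewrite big_split /= prodr_const; congr (_ * _).
    by apply: eq_bigr => i ->.
  by apply: eq_bigr => i /negbTE ->.
rewrite coefXnM coefC; case: (ltnP a #|A|) => h.
  by rewrite gtn_eqF.
case: (eqVneq #|A| a) => [e|ne]; first by rewrite e subnn eqxx.
have -> : (a - #|A| == 0)%N = false.
  by apply/negbTE; rewrite subn_eq0 -ltnNge ltn_neqAle ne h.
done.
Qed.

Lemma coefT2 k j a : (Tset k)`_j`_a = q k j a.
Proof.
rewrite coefT /q; case: eqP => [_|_]; first by rewrite coef0.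
rewrite coef_sum; apply: eq_bigr => S _.
exact: (coef_prod_gz (fun i : 'I_j => gap S i)).
Qed.

Lemma q_big k j a : (k < j)%N -> q k j a = 0.
Proof.
move=> h; rewrite /q; case: eqP => // _.
rewrite big1 // => S /eqP hS; exfalso.
by have := max_card (mem S); rewrite card_ord -/(#|S|) hS; lia.
Qed.

Lemma q_bigA k j a : (j < a)%N -> q k j a = 0.
Proof.
move=> h; rewrite /q; case: eqP => // _.
rewrite big1 // => S _; rewrite big1 // => A /eqP hA; exfalso.
by have := max_card (mem A); rewrite card_ord -/(#|A|) hA; lia.
Qed.

Definition wB : B := ('X%:P)%:P.
Definition zB : B := ('X)%:P.
Definition Fb p : B := ((Fs p)%:P)%:P.

Lemma Fs_rec p : Fs p.+1 = 'X^p - Fs p.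
Proof.
rewrite /Fs big_ord_recr /= subn1 /= subnn expr0 mul1r addrC; congr (_ + _).
rewrite -sumrN; apply: eq_bigr => i _.
have e : (p - i = (p - 1 - i).+1)%N by have := ltn_ord i; lia.
by rewrite e exprS mulN1r mulNr.
Qed.

Lemma Fs0 : Fs 0 = 0. Proof. by rewrite /Fs big_ord0. Qed.

Lemma Fb_rec p : Fb p.+1 = wB ^+ p - Fb p.
Proof. by rewrite /Fb Fs_rec !rmorphB /= !rmorphXn. Qed.

Lemma gB_E p : gB p = (1 + zB) * Fb p + (-1) ^+ p.
Proof.
rewrite /gB /gz /factor /= mulr1 mulr0 addr0 /zB /Fb.
rewrite !rmorphD !rmorphM /= !rmorphXn !rmorphN /= !rmorph1 -/(Fs p).
ring.
Qed.

Lemma gB1 : gB 1 = zB.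
Proof. by rewrite gB_E Fb_rec /Fb Fs0 !rmorph0 expr0 expr1; ring. Qed.

Lemma gB2 : gB 2 = (1 + zB) * (wB - 1) + 1.
Proof. rewrite gB_E !Fb_rec /Fb Fs0 !rmorph0; ring. Qed.

Lemma gB_rec p : gB p.+3 = (wB - 1) * gB p.+2 + wB * gB p.+1.
Proof. rewrite !gB_E !Fb_rec !exprS; ring. Qed.

Local Notation X4 := {poly {poly {poly {poly int}}}}.

Definition Zr N (P : X4) := forall k, (k <= N)%N -> P`_k = 0.

Lemma Z_add N (P Q : X4) : Zr N P -> Zr N Q -> Zr N (P + Q).
Proof. by move=> hP hQ k hk; rewrite coefD hP // hQ // addr0. Qed.

Lemma Z_opp N (P : X4) : Zr N P -> Zr N (- P).
Proof. by move=> hP k hk; rewrite coefN hP // oppr0. Qed.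

Lemma Z_mull N (R P : X4) : Zr N P -> Zr N (R * P).
Proof.
move=> hP k hk; rewrite coefM big1 // => i _.
by rewrite hP ?mulr0 //; apply: leq_trans hk; exact: leq_subr.
Qed.

Definition Dr (P : X4) : X4 := 'X * P^`().

Lemma coefDr (P : X4) k : (Dr P)`_k = P`_k *+ k.
Proof. by rewrite /Dr coefXM; case: k => [|k] //=; rewrite ?mulr0n // coef_deriv. Qed.

Lemma Z_D N (P : X4) : Zr N P -> Zr N (Dr P).
Proof. by move=> hP k hk; rewrite coefDr hP // mul0rn. Qed.

Lemma Dr_mul (P Q : X4) : Dr (P * Q) = Dr P * Q + P * Dr Q.
Proof. by rewrite /Dr derivM; ring. Qed.

Lemma Dr_sub (P Q : X4) : Dr (P - Q) = Dr P - Dr Q.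
Proof. by rewrite /Dr derivB; ring. Qed.

Definition wX : X4 := wB%:P.
Definition zX : X4 := zB%:P.
Definition yX : X4 := ('X : B)%:P.
Definition hX : X4 := 1 + (1 - wX) * 'X - wX * 'X^2.
Definition uX : X4 := 'X * (zX + wX * 'X).

Definition GP N : X4 := \poly_(p < N.+1) gg p.
Definition TP N : X4 := \poly_(k < N.+1) Tp k.

Lemma claim1 N : Zr N (GP N * hX - uX).
Proof.
move=> k hk.
have -> : GP N * hX - uX = GP N + (1 - wX) * ('X * GP N) - wX * ('X^2 * GP N)
   - ('X * zX + 'X^2 * wX) by rewrite /hX /uX; ring.
rewrite !coefB !coefD /wX /zX -!polyCB !coefCM !coefXM !coefXnM !coef_poly.
have h1 : (k.-1 < N.+1)%N by lia.
have h2 : (k - 2 < N.+1)%N by lia.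
rewrite ltnS hk h1 h2 !rmorphB !rmorph1 -/wB.
case: k {hk h1 h2} => [|[|[|k]]] /=; rewrite ?coefC /= /gg /=.
- ring.
- by rewrite gB1; ring.
- by rewrite gB2 gB1 /wB; ring.
have -> : (k.+3 - 2 = k.+1)%N by lia.
by rewrite gB_rec /wB; ring.
Qed.

Lemma claim3 N : Zr N (TP N * (1 - yX * GP N) - yX * Dr (GP N)).
Proof.
move=> k hk.
have -> : TP N * (1 - yX * GP N) - yX * Dr (GP N)
   = TP N - yX * (GP N * TP N) - yX * Dr (GP N) by ring.
rewrite !coefB /yX !coefCM coefDr coefM !coef_poly ltnS hk.
rewrite [Tp k]Tp_rec.
have -> : \sum_(i < k.+1) (GP N)`_i * (TP N)`_(k - i)
   = \sum_(i < k.+1) gg i * Tp (k - i).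
  apply: eq_bigr => i _; rewrite !coef_poly.
  have h1 : (i < N.+1)%N by have := ltn_ord i; lia.
  have h2 : (k - i < N.+1)%N by lia.
  by rewrite h1 h2.
ring.
Qed.

Lemma Dr_hX : Dr hX = (1 - wX) * 'X - (wX *+ 2) * 'X^2.
Proof.
rewrite /Dr /hX /wX !(derivD, derivB, derivM, derivC, derivX, derivXn, derivN) /=.
ring.
Qed.

Lemma Dr_uX : Dr uX = zX * 'X + (wX *+ 2) * 'X^2.
Proof.
rewrite /Dr /uX /wX /zX !(derivD, derivB, derivM, derivC, derivX, derivXn, derivN) /=.
ring.
Qed.

Definition NumP : X4 :=
  'X * yX * (-(wX * wX * 'X * 'X) + wX * 'X * 'X * zX + wX * 'X * 'X + (wX + wX) * 'X + zX).
Definition D1P : X4 := wX * 'X * 'X * yX + wX * 'X * 'X + 'X * yX * zX + wX * 'X - 'X - 1.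
Definition DenP : X4 := D1P * (wX * 'X - 1) * ('X + 1).

Lemma claim4 N : Zr N (TP N * DenP - NumP).
Proof.
have -> : TP N * DenP - NumP =
  hX ^+ 2 * (TP N * (1 - yX * GP N) - yX * Dr (GP N))
  + (yX * TP N * hX) * (GP N * hX - uX)
  + yX * (hX * Dr (GP N * hX - uX) + - (Dr hX * (GP N * hX - uX))).
  rewrite Dr_sub Dr_mul Dr_hX Dr_uX /DenP /NumP /hX /uX /D1P; ring.
apply: Z_add; [apply: Z_add|].
- exact: (Z_mull _ (@claim3 N)).
- exact: (Z_mull _ (@claim1 N)).
exact: (Z_mull _ (Z_add (Z_mull _ (Z_D (@claim1 N))) (Z_opp (Z_mull _ (@claim1 N))))).
Qed.

Definition approx N (f : fps) (P : X4) :=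
  forall k j a, (k <= N)%N -> (j <= N)%N -> (a <= N)%N -> f k j a = P`_k`_j`_a.

Lemma approx_add N f g (P Q : X4) :
  approx N f P -> approx N g Q -> approx N (fps_add f g) (P + Q).
Proof. by move=> hf hg k j a hk hj ha; rewrite /fps_add hf // hg // !coefD. Qed.

Lemma approx_opp N f (P : X4) : approx N f P -> approx N (fps_opp f) (- P).
Proof. by move=> hf k j a hk hj ha; rewrite /fps_opp hf // !coefN. Qed.

Lemma approx_mul N f g (P Q : X4) :
  approx N f P -> approx N g Q -> approx N (fps_mul f g) (P * Q).
Proof.
move=> hf hg k j a hk hj ha; rewrite /fps_mul coefM !coef_sum.
apply: eq_bigr => i _; rewrite coefM coef_sum; apply: eq_bigr => l _.
rewrite coefM; apply: eq_bigr => m _.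
have hi := ltn_ord i; have hl := ltn_ord l; have hm := ltn_ord m.
rewrite hf ?hg //; lia.
Qed.

Lemma ifsub (T : Type) (x y : T) m n :
  (if (m < n)%N then x else if (m - n == 0)%N then y else x) = if m == n then y else x.
Proof.
case: (ltngtP m n) => h //.
by rewrite -[(m - n == 0)%N]negbK -lt0n subn_gt0 h.
by rewrite h subnn.
Qed.

Lemma approx_mon N c k0 j0 a0 :
  approx N (fps_mon c k0 j0 a0) (((c%:P * 'X^a0)%:P * 'X^j0)%:P * 'X^k0).
Proof.
move=> k j a _ _ _; rewrite /fps_mon !(coefMXn, coefC) !ifsub -[in RHS]mulrb coefMn.
rewrite !(coefMXn, coefC) !ifsub -[in RHS]mulrb coefMn.
rewrite coefMn !(coefMXn, coefC) !ifsub -[in RHS]mulrb.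
by case: (k == k0); case: (j == j0); case: (a == a0).
Qed.

Lemma approx_eq N f (P Q : X4) : approx N f P -> P = Q -> approx N f Q.
Proof. by move=> h <-. Qed.

Lemma approx1 N : approx N fps1 1.
Proof.
have -> : (1 : X4) = ((1%:P * 'X^0)%:P * 'X^0)%:P * 'X^0 by rewrite !expr0 !mulr1.
exact: approx_mon.
Qed.
Lemma approxW N : approx N fpsW wX.
Proof.
have -> : wX = (('X%:P * 'X^0)%:P * 'X^0)%:P * 'X^0 by rewrite !expr0 !mulr1.
exact: approx_mon.
Qed.
Lemma approxX N : approx N fpsX 'X.
Proof.
have -> : ('X : X4) = ((1%:P * 'X^0)%:P * 'X^0)%:P * 'X^1 by rewrite !expr0 !expr1 !mulr1 mul1r.
exact: approx_mon.
Qed.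
Lemma approxY N : approx N fpsY yX.
Proof.
have -> : yX = ((1%:P * 'X^0)%:P * 'X^1)%:P * 'X^0 by rewrite !expr0 !expr1 !mulr1 mul1r.
exact: approx_mon.
Qed.
Lemma approxZ N : approx N fpsZ zX.
Proof.
have -> : zX = ((1%:P * 'X^1)%:P * 'X^0)%:P * 'X^0 by rewrite !expr0 !expr1 !mulr1 mul1r.
exact: approx_mon.
Qed.

Ltac approx_tac :=
  repeat match goal with
  | |- approx _ (fps_add _ _) _ => refine (approx_add _ _)
  | |- approx _ (fps_mul _ _) _ => refine (approx_mul _ _)
  | |- approx _ (fps_opp _) _ => refine (approx_opp _)
  | |- approx _ fps1 _ => exact: approx1
  | |- approx _ fpsW _ => exact: approxW
  | |- approx _ fpsX _ => exact: approxX
  | |- approx _ fpsY _ => exact: approxY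
  | |- approx _ fpsZ _ => exact: approxZ
  end.

Lemma approxNumer N : approx N Numer NumP.
Proof. rewrite /Numer /NumP; approx_tac. Qed.

Lemma approxDenom N : approx N Denom DenP.
Proof. rewrite /Denom /DenP /D1P; approx_tac. Qed.

Lemma Qser_q k j a : Qser k j a = q k j a.
Proof.
rewrite /Qser; case: (leqP 1 k) => h1 /=; last first.
  case: (eqVneq j 0%N) => [->|j0]; first by rewrite /q eqxx.
  by rewrite q_big //; lia.
case: (leqP j k) => h2 /=; last by rewrite q_big.
by case: (leqP a j) => h3 //=; rewrite q_bigA.
Qed.

Lemma approxQ N : approx N Qser (TP N).
Proof.
move=> k j a hk _ _; rewrite Qser_q coef_poly ltnS hk -Tset_Tp coefT2 //.
Qed.

Theorem propositionB5 :
  forall k j a : nat, fps_mul Qser Denom k j a = Numer k j a.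
Proof.
move=> k j a; set N := (k + j + a)%N.
have hk : (k <= N)%N by rewrite /N; lia.
have hj : (j <= N)%N by rewrite /N; lia.
have ha : (a <= N)%N by rewrite /N; lia.
rewrite (approx_mul (@approxQ N) (@approxDenom N)) // (@approxNumer N) //.
have := @claim4 N k hk; rewrite coefB => /eqP; rewrite subr_eq0 => /eqP ->.
by [].
Qed.
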